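(* For every integer $k\ge 0$, $$\lim_{N\to\infty}\Pr[\mathcal{L}_N=k]=\frac{e^{-1}}{k!},$$ i.e. $\mathcal{L}_N$ converges in distribution to a Poisson random variable with mean $1$.
   Context: A random recursive hypergraph (RRH) is the random hypergraph process defined as follows. At size $N=1$ it has vertex set $\{v_1\}$ and edge set $\{\{v_1\}\}$. Given the hypergraph of size $N$ (vertices $v_1,\dots,v_N$, exactly $N$ edges), one chooses an existing edge $e$ uniformly at random, independently of the past, and adds a new vertex $v_{N+1}$ together with the new edge $e\cup\{v_{N+1}\}$. A leaf is a vertex $v\neq v_1$ such that the only edge containing $v$ is $\{v_1,v\}$. $\mathcal{L}_N$ denotes the number of leaves in the RRH of size $N$. *)

(* Defs.v *)
From HB Require Import structures.
From mathcomp Require Import all_boot all_order all_algebra.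
From mathcomp Require Import all_classical all_reals all_analysis.
Set Implicit Arguments. Unset Strict Implicit. Unset Printing Implicit Defensive.
Import Order.TTheory GRing.Theory Num.Theory.

(* Vertices v_1, ..., v_N are encoded as the naturals 0, ..., N-1
   (v_1 = 0).  Edges are encoded as lists of vertices (read as sets).
   Edges are indexed by creation order: edge 0 is {v_1}.

   A history of the RRH up to size N is the list [c_1; ...; c_{N-1}]
   of the edge indices chosen at each step, where at step n (going from
   size n to size n+1) the chosen index c_n ranges over {0, ..., n-1}. *)

(* All histories leading to size N (each has probability 1/(N-1)!). *)
Fixpoint rrh_histories (N : nat) : seq (seq nat) :=
  match N with
  | 0 => [::]
  | 1 => [:: [::]]
  | n.+1 => [seq rcons h c | h <- rrh_histories n, c <- iota 0 n]
  end.

Definition rrh_edges (h : seq nat) : seq (seq nat) :=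
  foldl (fun E c => rcons E (rcons (nth [::] E c) (size E))) [:: [:: 0]] h.

Definition is_pair0 (v : nat) (e : seq nat) : bool :=
  [&& 0 \in e, v \in e & all (fun x => (x == 0) || (x == v)) e].

Definition is_leaf (E : seq (seq nat)) (v : nat) : bool :=
  (v != 0) && ([seq e <- E | v \in e] != [::])
  && all (is_pair0 v) [seq e <- E | v \in e].

Definition num_leaves (N : nat) (h : seq nat) : nat :=
  count (is_leaf (rrh_edges h)) (iota 0 N).

(* Pr[L_N = k] under the uniform, independent choice of edges. *)
Definition prob_leaves (R : realType) (N k : nat) : R :=
  (count (fun h => num_leaves N h == k) (rrh_histories N))%:R
  / (size (rrh_histories N))%:R.

(* Main.v *)
Require Import Defs.
From HB Require Import structures.
From mathcomp Require Import all_boot all_order all_algebra.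
From mathcomp Require Import all_classical all_reals all_analysis.
From mathcomp Require Import zify ring lra.
Import Order.TTheory GRing.Theory Num.Theory.
Import numFieldNormedType.Exports.
Set Implicit Arguments. Unset Strict Implicit.

Definition rinv N (E : seq (seq nat)) :=
  [/\ size E = N, nth [::] E 0 = [:: 0],
     (forall j, 0 < j < N -> j \in nth [::] E j) &
     (forall e, e \in E -> forall x, x \in e -> x < N)]%N.

Lemma edges_rcons h c : rrh_edges (rcons h c) =
  rcons (rrh_edges h) (rcons (nth [::] (rrh_edges h) c) (size (rrh_edges h))).
Proof. by rewrite /rrh_edges foldl_rcons. Qed.

Lemma hist_SS N : rrh_histories N.+2 =
  [seq rcons h c | h <- rrh_histories N.+1, c <- iota 0 N.+1].
Proof. by []. Qed.

Lemma rinv_step N E c : (0 < N)%N -> (c < N)%N -> rinv N E ->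
  rinv N.+1 (rcons E (rcons (nth [::] E c) (size E))).
Proof.
move=> N0 cN [sE E0 Ej Ex]; split.
- by rewrite size_rcons sE.
- by rewrite nth_rcons sE N0.
- move=> j /andP[j0 jN]; rewrite nth_rcons sE.
  rewrite ltnS leq_eqVlt in jN; case/orP: jN => [/eqP->|jlt].
    by rewrite ltnn eqxx mem_rcons mem_head.
  by rewrite jlt; apply: Ej; rewrite j0.
- move=> e; rewrite mem_rcons in_cons => /orP[/eqP->|eE] x.
    rewrite mem_rcons in_cons => /orP[/eqP->|xe]; first by rewrite sE.
    apply: ltnW; apply: (Ex (nth [::] E c)) => //.
    by apply: mem_nth; rewrite sE.
  by move=> xe; apply: ltnW; apply: Ex eE x xe.
Qed.

Lemma hist_rinv N h : h \in rrh_histories N.+1 -> rinv N.+1 (rrh_edges h).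
Proof.
elim: N h => [|N IH] h.
  rewrite /= inE => /eqP->; split => //.
  - by case=> // j /andP[] //.
  - by move=> e; rewrite inE => /eqP-> x; rewrite inE => /eqP->.
rewrite hist_SS => /allpairsP[[h' c] [h'H cI ->]].
have Hi := IH _ h'H; have [sE _ _ _] := Hi.
rewrite edges_rcons; apply: (@rinv_step N.+1) => //.
by move: cI; rewrite [_.2]/= mem_iota.
Qed.

Lemma leaf_pair E v e : is_leaf E v -> e \in E -> v \in e -> is_pair0 v e.
Proof.
case/andP=> _ /allP H eE ve; apply: H; by rewrite mem_filter ve eE.
Qed.

Lemma leaf_new N E c : (0 < N)%N -> (c < N)%N -> rinv N E ->
  is_leaf (rcons E (rcons (nth [::] E c) (size E))) N = (c == 0%N).
Proof.
move=> N0 cN [sE E0 Ej Ex].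
have F : [seq e <- E | N \in e] = [::].
  rewrite (eq_in_filter (a2 := pred0)) ?filter_pred0 // => e eE /=.
  by apply/negbTE/negP => /(Ex e eE); rewrite ltnn.
rewrite /is_leaf filter_rcons sE mem_rcons mem_head F /= -lt0n N0 /=.
rewrite /is_pair0 ?andbT !mem_rcons mem_head all_rcons eqxx orbT /= ?andbT.
rewrite in_cons eq_sym (negbTE (lt0n_neq0 N0)) /=.
have EcE : nth [::] E c \in E by apply: mem_nth; rewrite sE.
rewrite (eq_in_all (a2 := fun x => x == 0%N)); last first.
  by move=> x xe /=; rewrite (ltn_eqF (Ex _ EcE x xe)) orbF.
move: EcE; case: c cN => [|c] cN EcE; first by rewrite E0.
have : c.+1 \in nth [::] E c.+1 by apply: Ej; rewrite cN.
move=> H; apply/negbTE; apply/negP => /andP[_ /allP/(_ _ H)].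
by [].
Qed.

Lemma leaf_old N E c v : (0 < N)%N -> (c < N)%N -> rinv N E -> (v < N)%N ->
  is_leaf (rcons E (rcons (nth [::] E c) (size E))) v =
  is_leaf E v && (v \notin nth [::] E c).
Proof.
move=> N0 cN [sE E0 Ej Ex] vN.
rewrite /is_leaf filter_rcons sE mem_rcons in_cons (ltn_eqF vN) /=.
case: (boolP (v \in nth [::] E c)) => vc; last by rewrite !andbT.
rewrite andbF all_rcons /is_pair0 all_rcons !mem_rcons !in_cons (gtn_eqF N0) (gtn_eqF vN) /=.
by rewrite !(andbF, andFb).
Qed.

Lemma leaf_in N E c : (c < N)%N -> rinv N E ->
  count (fun v => is_leaf E v && (v \in nth [::] E c)) (iota 0 N) = is_leaf E c.
Proof.
move=> cN [sE E0 Ej Ex].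
have EcE : nth [::] E c \in E by apply: mem_nth; rewrite sE.
case: (boolP (is_leaf E c)) => Lc.
  have c0 : c != 0%N by case/andP: Lc => /andP[].
  rewrite (eq_in_count (a2 := pred1 c)).
    by rewrite count_uniq_mem ?iota_uniq // mem_iota cN leq0n.
  move=> v _ /=; apply/idP/idP => [/andP[Lv vc]|/eqP->].
    have := leaf_pair Lc EcE.
    have cc : c \in nth [::] E c by apply: Ej; rewrite lt0n c0.
    case/(_ cc)/and3P=> _ _ /allP/(_ v vc)/orP[/eqP v0|//].
    by move: Lv; rewrite v0 /is_leaf eqxx.
  by rewrite Lc Ej // lt0n c0.
rewrite (eq_in_count (a2 := pred0)) ?count_pred0 // => v _ /=.
apply/negbTE/negP => /andP[Lv vc].
have /and3P[_ _ /allP Ha] := leaf_pair Lv EcE vc.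
move: EcE Ha vc; case: c cN Lc => [|c] cN Lc EcE Ha vc.
  by move: vc Lv; rewrite E0 inE => /eqP->; rewrite /is_leaf eqxx.
have cc : c.+1 \in nth [::] E c.+1 by apply: Ej.
by case/orP: (Ha _ cc) => /eqP ce //; move: Lv; rewrite -ce (negbTE Lc).
Qed.

Lemma count_split (T : Type) (a b : pred T) s :
  count a s = count (fun x => a x && b x) s + count (fun x => a x && ~~ b x) s.
Proof.
elim: s => //= x s ->; case: (a x); case: (b x) => /=; rewrite ?add0n ?addnS ?addSn //.
Qed.

Lemma leaves_step N E c : (0 < N)%N -> (c < N)%N -> rinv N E ->
  (count (is_leaf (rcons E (rcons (nth [::] E c) (size E)))) (iota 0 N.+1)
   + is_leaf E c = count (is_leaf E) (iota 0 N) + (c == 0%N))%N.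
Proof.
move=> N0 cN Hi.
rewrite -addn1 iotaD count_cat /= add0n leaf_new // addn0.
rewrite (eq_in_count (a2 := fun v => is_leaf E v && (v \notin nth [::] E c))); last first.
  by move=> v; rewrite mem_iota add0n /= => vN; exact: (leaf_old N0 cN Hi vN).
rewrite (count_split (is_leaf E) (fun v => v \in nth [::] E c)).
rewrite (leaf_in cN Hi).
by rewrite addnAC; congr (_ + _)%N; rewrite addnC.
Qed.

Definition cnt N k := count (fun h => num_leaves N h == k) (rrh_histories N).

Lemma sumn_mapD (T : Type) (f g : T -> nat) s :
  sumn [seq (f x + g x)%N | x <- s] = (sumn (map f s) + sumn (map g s))%N.
Proof. by elim: s => //= x s ->; rewrite addnACA. Qed.

Lemma sumn_map_eq (T : Type) (F : T -> nat) j m s :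
  sumn [seq ((F x == j) * m)%N | x <- s] = (count (fun x => F x == j) s * m)%N.
Proof. by elim: s => //= x s ->; rewrite mulnDl. Qed.

Lemma sumn_map3 (T : Type) (F : T -> nat) j1 j2 j3 m1 m2 m3 s :
  sumn [seq ((F x == j1) * m1 + (F x == j2) * m2 + (F x == j3) * m3)%N | x <- s] =
  (count (fun x => F x == j1) s * m1 + count (fun x => F x == j2) s * m2
   + count (fun x => F x == j3) s * m3)%N.
Proof.
elim: s => //= x s ->; rewrite !mulnDl.
lia.
Qed.

Lemma leaf0 E : is_leaf E 0 = false.
Proof. by []. Qed.

Lemma count_andC (T : Type) (a : pred T) (b : bool) s :
  count (fun x => a x && b) s = (b * count a s)%N.
Proof. by case: b; rewrite ?mul1n ?mul0n; elim: s => //= x s ->; rewrite ?andbT ?andbF. Qed.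

Lemma per_h n h k : h \in rrh_histories n.+1 ->
  count (fun c => num_leaves n.+2 (rcons h c) == k) (iota 0 n.+1) =
  ((if k is j.+1 then num_leaves n.+1 h == j else false)
   + (num_leaves n.+1 h == k.+1) * k.+1 + (num_leaves n.+1 h == k) * (n - k))%N.
Proof.
move=> hH; have Hi := hist_rinv hH; have [sE _ _ _] := Hi.
set E := rrh_edges h in Hi sE *.
set l := num_leaves n.+1 h.
have step c : (c < n.+1)%N ->
    (num_leaves n.+2 (rcons h c) + is_leaf E c = l + (c == 0%N))%N.
  move=> cN; rewrite /num_leaves edges_rcons -/E.
  by rewrite (leaves_step (ltn0Sn n) cN Hi).
have lE : l = count (is_leaf E) (iota 1 n) by rewrite /l /num_leaves -/E.
clearbody l.
rewrite [iota 0 n.+1]/= /=.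
have := step 0%N isT; rewrite leaf0 addn0 addn1 => ->.
rewrite (count_split _ (fun c => is_leaf E c)).
rewrite (eq_in_count (a2 := fun c => is_leaf E c && (l == k.+1))); last first.
  move=> c; rewrite mem_iota add1n ltnS => /andP[c0 cN] /=.
  have := step c cN; rewrite (gtn_eqF c0) addn0.
  by case: (is_leaf E c) => /= H; rewrite ?andbF ?andbT // -H ?addn1 ?eqSS ?addn0.
rewrite [count (fun c => _ && ~~ _) _](eq_in_count (a2 := fun c => ~~ is_leaf E c && (l == k))); last first.
  move=> c; rewrite mem_iota add1n ltnS => /andP[c0 cN] /=.
  have := step c cN; rewrite (gtn_eqF c0) addn0.
  by case: (is_leaf E c) => /= H; rewrite ?andbF ?andbT // -H ?addn1 ?eqSS ?addn0.
rewrite !count_andC.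
have Hc : count (fun c => ~~ is_leaf E c) (iota 1 n) = (n - l)%N.
  rewrite lE; apply/eqP; rewrite -(eqn_add2l (count (is_leaf E) (iota 1 n))) subnKC; last by have := count_size (is_leaf E) (iota 1 n); rewrite size_iota.
  by have := count_predC (is_leaf E) (iota 1 n); rewrite size_iota => ->.
rewrite Hc -lE.
have -> : (l.+1 == k) = (if k is j.+1 then l == j else false) by case: k.
rewrite addnA; congr (_ + _ + _)%N.
- by case: k.
- by case: (l =P k.+1) => [->|].
- by case: (l =P k) => [->|].
Qed.

Lemma cnt_step n k : cnt n.+2 k =
  ((if k is j.+1 then cnt n.+1 j else 0) + cnt n.+1 k.+1 * k.+1 + cnt n.+1 k * (n - k))%N.
Proof.
rewrite /cnt hist_SS count_flatten -map_comp.
rewrite (proj1 (@eq_in_map _ _ _ (fun h => ((num_leaves n.+1 h == k.-1) * (0 < k)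
   + (num_leaves n.+1 h == k.+1) * k.+1 + (num_leaves n.+1 h == k) * (n - k))%N) _) _); last first.
  move=> h hH; rewrite [LHS]/comp count_map; have := per_h k hH; rewrite /preim => ->.
  by case: k => [|j] //=; rewrite ?muln1 ?muln0.
rewrite (sumn_map3 (num_leaves n.+1)).
by case: k => [|j] //=; rewrite ?muln1 ?muln0.
Qed.

Lemma cnt1 k : cnt 1 k = (k == 0%N).
Proof. by case: k. Qed.

Lemma size_hist n : size (rrh_histories n.+1) = n`!.
Proof.
elim: n => // n IH; rewrite hist_SS size_allpairs IH size_iota factS mulnC.
by [].
Qed.

Section R.
Local Open Scope ring_scope.
Variable R : realType.

Definition Ef (j : nat) : R := \sum_(i < j) (-1) ^+ i / (i`!)%:R.
Definition q (n k : nat) : R := Ef (n.+1 - k) / (k`!)%:R.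

Lemma Ef0 : Ef 0 = 0. Proof. by rewrite /Ef big_ord0. Qed.
Lemma EfS j : Ef j.+1 = Ef j + (-1) ^+ j / (j`!)%:R.
Proof. by rewrite /Ef big_ord_recr. Qed.
Lemma Ef1 : Ef 1 = 1. Proof. by rewrite EfS Ef0 expr0 fact0 add0r divr1. Qed.

Lemma fact_neq0 n : (n`!)%:R != 0 :> R.
Proof. by rewrite pnatr_eq0 -lt0n fact_gt0. Qed.

Lemma q_rec n k : (n.+1)%:R * q n.+1 k =
  (if k is j.+1 then q n j else 0) + (k.+1)%:R * q n k.+1 + (n - k)%:R * q n k.
Proof.
rewrite /q; case: (ssrnat.leqP k n) => [kn|nk].
  have [m ->] : exists m, n = (k + m)%N by exists (n - k)%N; lia.
  have -> : ((k + m).+2 - k = m.+2)%N by lia.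
  have -> : ((k + m).+1 - k = m.+1)%N by lia.
  have -> : ((k + m).+1 - k.+1 = m)%N by lia.
  have -> : ((k + m) - k = m)%N by lia.
  have h1 := fact_neq0 m.
  have h3 : m%:R + 1 != 0 :> R by rewrite natr1 pnatr_eq0.
  clear kn; case: k => [|j].
    rewrite !EfS !factS !natrM exprS fact0 /= add0r add0n -!natr1; field.
    by rewrite h3 h1.
  have -> : ((j.+1 + m).+1 - j = m.+2)%N by lia.
  rewrite !EfS !factS !natrM exprS.
  have h2 := fact_neq0 j.
  have h4 : j%:R + 1 != 0 :> R by rewrite natr1 pnatr_eq0.
  have h5 : j%:R + 1 + 1 != 0 :> R by rewrite !natr1 pnatr_eq0.
  rewrite -!natr1 !natrD; field.
  by rewrite h2 h4 h1 h5 h3.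
have [->|lt] : k = n.+1 \/ (n.+1 < k)%N by lia.
  have -> : (n.+2 - n.+1 = 1)%N by lia.
  have -> : (n.+1 - n.+2 = 0)%N by lia.
  have -> : (n.+1 - n = 1)%N by lia.
  have -> : (n - n.+1 = 0)%N by lia.
  rewrite Ef1 Ef0 factS natrM !mul0r !mulr0 !addr0.
  have h1 := fact_neq0 n.
  have h3 : n%:R + 1 != 0 :> R by rewrite natr1 pnatr_eq0.
  rewrite -!natr1; field.
  by rewrite h1 h3.
case: k lt nk => [|j] // lt _.
have -> : (n.+2 - j.+1 = 0)%N by lia.
have -> : (n.+1 - j.+2 = 0)%N by lia.
have -> : (n.+1 - j = 0)%N by lia.
have -> : (n.+1 - j.+1 = 0)%N by lia.
by rewrite !Ef0 !mul0r !mulr0 !addr0.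
Qed.

Lemma cnt_q n k : (cnt n.+1 k)%:R = (n`!)%:R * q n k.
Proof.
elim: n k => [|n IH] k.
  rewrite cnt1 /q; case: k => [|j]; first by rewrite Ef1 fact0 !mul1r invr1.
  have -> : (1 - j.+1 = 0)%N by lia.
  by rewrite Ef0 mul0r mulr0.
rewrite cnt_step factS natrM mulrAC q_rec.
case: k => [|j] /=; rewrite !natrD !natrM ?IH; ring.
Qed.

Lemma prob_q n k : prob_leaves R n.+1 k = q n k.
Proof.
rewrite /prob_leaves -/(cnt n.+1 k) cnt_q size_hist.
by have h := fact_neq0 n; field.
Qed.
End R.

Local Open Scope ring_scope.
Local Open Scope classical_set_scope.

Theorem mainTheorem12 (R : realType) (k : nat) :
  (fun N : nat => prob_leaves R N k) @ \oo --> (expR (-1) / (k`!)%:R : R).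
Proof.
rewrite -(cvg_shiftn k.+1).
rewrite (_ : [sequence _]_n = fun n => Ef R n.+1 * (k`!%:R)^-1); last first.
  apply: funext => n /=; rewrite addnS prob_q /q.
  by have -> : ((n + k).+1 - k = n.+1)%N by lia.
apply: cvgMr_tmp.
rewrite (_ : (fun n => Ef R n.+1) = fun n => series (exp_coeff (-1 : R)) n.+1); last first.
  by apply: funext => n; rewrite /series /= big_mkord.
rewrite (cvg_shiftS (fun n => series (exp_coeff (-1 : R)) n)).
exact: is_cvg_series_exp_coeff.
Qed.
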